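(* Let $J\in\mathbb{N}_0$ and let $(a_j)_{j>J}$ be complex numbers with $\sum_{j>J}|a_j|<\infty$ and $|a_j|\ge|a_{j+1}|>0$ for all integers $j>J$. Suppose there is a convex function $\varphi\colon\,]J,\infty[\,\to\mathbb{R}$ with $\varphi(j)=j/|a_j|$ for every integer $j>J$. Then the functions $$f(t)=\sum_{j>J}a_j\exp(i t j/|a_j|),\qquad \operatorname{Re}f(t),\qquad \operatorname{Im}f(t)$$ are continuous on $\mathbb{R}$ but differentiable at no point of $\mathbb{R}$.
   Context: Sums over $j>J$ range over integers $j>J$. *)

(* Defs.v *)
From Stdlib Require Import Reals.
Open Scope R_scope.

(* A complex sequence a_j is given by its real part ar and imaginary part ai. *)
Definition cmod (ar ai : nat -> R) (j : nat) : R :=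
  sqrt (ar j ^ 2 + ai j ^ 2).

Definition freq (ar ai : nat -> R) (j : nat) : R := INR j / cmod ar ai j.

(* Real and imaginary parts of the term a_j exp(i t j/|a_j|). *)
Definition re_term (ar ai : nat -> R) (t : R) (j : nat) : R :=
  ar j * cos (t * freq ar ai j) - ai j * sin (t * freq ar ai j).
Definition im_term (ar ai : nat -> R) (t : R) (j : nat) : R :=
  ar j * sin (t * freq ar ai j) + ai j * cos (t * freq ar ai j).

(* Sum over integers j > J, i.e. j = J+1+n, n >= 0: the series has sum l. *)
Definition sum_gt (J : nat) (u : nat -> R) (l : R) : Prop :=
  infinite_sum (fun n => u (J + 1 + n)%nat) l.

Definition convex_on_gt (J : nat) (phi : R -> R) : Prop :=
  forall x y lam, INR J < x -> INR J < y -> 0 <= lam <= 1 ->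
    phi (lam * x + (1 - lam) * y) <= lam * phi x + (1 - lam) * phi y.

Definition differentiable_at (g : R -> R) (t : R) : Prop :=
  exists l, derivable_pt_lim g t l.

(* Main.v *)
Require Import Defs.
From Stdlib Require Import Reals Lra Lia Psatz.
From Coquelicot Require Import Coquelicot.
Open Scope R_scope.


Lemma abs_sin_le x : Rabs (sin x) <= Rabs x.
Proof.
  destruct (Rtotal_order x 0) as [H|[H|H]].
  - pose proof (sin_lt_x (-x) ltac:(lra)). rewrite sin_neg in H0.
    pose proof (sin_lt_x (-x) ltac:(lra)).
    assert (sin x < 0 \/ 0 <= sin x) as [Hs|Hs] by lra.
    + rewrite !Rabs_left; lra.
    + rewrite Rabs_pos_eq, Rabs_left by lra.
      pose proof (SIN_bound x).
      destruct (Rle_dec (-x) 1).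
      *
        assert (sin x <= 0). { rewrite <- (Ropp_involutive x), sin_neg.
          assert (0 <= sin (-x)). { apply sin_ge_0; pose proof PI_RGT_0; pose proof PI2_1; lra. } lra. }
        lra.
      * lra.
  - subst. rewrite sin_0, Rabs_R0. lra.
  - pose proof (sin_lt_x x H).
    assert (sin x < 0 \/ 0 <= sin x) as [Hs|Hs] by lra.
    + rewrite Rabs_left, Rabs_pos_eq by lra. pose proof (SIN_bound x).
      destruct (Rle_dec x 1).
      * assert (0 <= sin x). { apply sin_ge_0; pose proof PI_RGT_0; pose proof PI2_1; lra. } lra.
      * lra.
    + rewrite !Rabs_pos_eq; lra.
Qed.

Lemma exR (f : R -> R) a b :
  (forall x, Rmin a b <= x <= Rmax a b -> continuity_pt f x) -> ex_RInt f a b.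
Proof.
  intros H. apply (@ex_RInt_continuous R_CompleteNormedModule). intros z Hz.
  apply continuity_pt_filterlim. now apply H.
Qed.

Lemma exRg (f : R -> R) a b : (forall x, continuity_pt f x) -> ex_RInt f a b.
Proof. intros H; apply exR; auto. Qed.

Lemma RInt_add (f g : R -> R) a b : ex_RInt f a b -> ex_RInt g a b ->
  RInt (fun x => f x + g x) a b = RInt f a b + RInt g a b.
Proof. intros. apply (RInt_plus f g a b); auto. Qed.

Lemma RInt_sub (f g : R -> R) a b : ex_RInt f a b -> ex_RInt g a b ->
  RInt (fun x => f x - g x) a b = RInt f a b - RInt g a b.
Proof. intros. apply (RInt_minus f g a b); auto. Qed.

Lemma RInt_mulc (f : R -> R) a b l : ex_RInt f a b ->
  RInt (fun x => l * f x) a b = l * RInt f a b.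
Proof. intros. apply (RInt_scal f a b l); auto. Qed.

Lemma RInt_cst a b c : RInt (fun _ => c) a b = (b - a) * c.
Proof. rewrite RInt_const. reflexivity. Qed.

Lemma RInt_bound (f g : R -> R) a b : a <= b -> ex_RInt f a b -> ex_RInt g a b ->
  (forall x, a < x < b -> Rabs (f x) <= g x) -> Rabs (RInt f a b) <= RInt g a b.
Proof.
  intros Hab Hf Hg H. eapply Rle_trans. apply abs_RInt_le; auto.
  apply RInt_le; auto. apply ex_RInt_norm; auto.
Qed.

Lemma cont_derive (f : R -> R) x : ex_derive f x -> continuity_pt f x.
Proof. intros H. apply continuity_pt_filterlim. now apply (@ex_derive_continuous R_AbsRing R_NormedModule). Qed.

Lemma RInt_invsq a b : 0 < a <= b \/ a <= b < 0 ->
  RInt (fun x => / (x * x)) a b = / a - / b.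
Proof.
  intros H.
  assert (Hd: forall x, Rmin a b <= x <= Rmax a b -> is_derive (fun x => - / x) x (/ (x*x))).
  { intros x Hx. rewrite Rmin_left in Hx by lra. rewrite Rmax_right in Hx by lra.
    assert (x <> 0) by lra.
    auto_derive; auto. field; auto. }
  pose proof (is_RInt_derive _ _ a b Hd) as Hi.
  rewrite (is_RInt_unique _ _ _ _ (Hi ltac:(intros x Hx; rewrite Rmin_left in Hx by lra; rewrite Rmax_right in Hx by lra; apply continuity_pt_filterlim; apply cont_derive; assert (x<>0) by lra; auto_derive; auto))).
  unfold minus, plus, opp; simpl. ring.
Qed.

Lemma RInt_extR (f g : R -> R) a b : (forall x, Rmin a b < x < Rmax a b -> f x = g x) ->
  RInt f a b = RInt g a b.
Proof. intros H. apply RInt_ext. exact H. Qed.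


Lemma cont_if0 (g : R -> R) (v x : R) :
  (x <> 0 -> continuity_pt g x) ->
  (forall eps, 0 < eps -> exists d, 0 < d /\ forall y, y <> 0 -> Rabs y < d -> Rabs (g y - v) < eps) ->
  continuity_pt (fun y => if Req_EM_T y 0 then v else g y) x.
Proof.
  intros Hg Hv. unfold continuity_pt, continue_in, limit1_in, limit_in. simpl. unfold R_dist.
  intros eps Heps.
  destruct (Req_EM_T x 0) as [Hx|Hx].
  - subst x. destruct (Hv eps Heps) as [d [Hd H]]. exists d. split; auto.
    intros y [_ Hy]. rewrite Rminus_0_r in Hy.
    destruct (Req_EM_T y 0). { rewrite Rminus_diag, Rabs_R0; lra. } now apply H.
  - destruct (Hg Hx eps Heps) as [d [Hd H]]. simpl in H. unfold R_dist in H.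
    exists (Rmin d (Rabs x)). split. { apply Rmin_glb_lt; auto. apply Rabs_pos_lt; auto. }
    intros y [Hy1 Hy2].
    destruct (Req_EM_T y 0) as [Hy|Hy].
    + subst. rewrite Rminus_0_l, Rabs_Ropp in Hy2. pose proof (Rmin_r d (Rabs x)). lra.
    + apply H. split; auto. pose proof (Rmin_l d (Rabs x)). lra.
Qed.

Definition sinc (x : R) : R := if Req_EM_T x 0 then 1 else sin x / x.

Lemma sinc_cont x : continuity_pt sinc x.
Proof.
  apply cont_if0.
  - intros Hx. apply cont_derive. auto_derive. auto.
  - intros eps Heps. destruct (derivable_pt_lim_sin 0 eps Heps) as [d Hd].
    exists d. split. { apply cond_pos. } intros y Hy1 Hy2.
    specialize (Hd y Hy1 Hy2). rewrite Rplus_0_l, sin_0, cos_0, Rminus_0_r in Hd. exact Hd.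
Qed.

Lemma sinc_abs x : Rabs (sinc x) <= 1.
Proof.
  unfold sinc. destruct (Req_EM_T x 0). { rewrite Rabs_R1; lra. }
  unfold Rdiv. rewrite Rabs_mult, Rabs_inv. pose proof (abs_sin_le x).
  pose proof (Rabs_pos_lt x n).
  apply (Rmult_le_reg_r (Rabs x)); auto. rewrite Rmult_assoc, Rinv_l by lra. lra.
Qed.

Lemma sinc_even x : sinc (- x) = sinc x.
Proof.
  unfold sinc. destruct (Req_EM_T (-x) 0), (Req_EM_T x 0); try lra.
  rewrite sin_neg. field. auto.
Qed.

Lemma sinc_lower x : Rabs x <= 1 -> 1/2 <= sinc x.
Proof.
  intros H. unfold sinc. destruct (Req_EM_T x 0). lra.
  assert (Hs : forall z, 0 < z <= 1 -> 1/2 <= sin z / z).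
  { intros z Hz. pose proof (sin_bound z 0 ltac:(lra) ltac:(pose proof PI2_1; pose proof PI_RGT_0; lra)) as [Hl _].
    unfold sin_approx, sin_term in Hl. simpl in Hl.
    assert (E: sin z / z * z = sin z) by (field; lra).
    set (t := sin z / z) in *. nra. }
  destruct (Rle_dec 0 x).
  - apply Hs. rewrite Rabs_pos_eq in H by lra. lra.
  - replace (sin x / x) with (sin (-x) / (-x)). apply Hs. rewrite Rabs_left in H by lra. lra.
    rewrite sin_neg. field. auto.
Qed.

Definition K (u : R) : R := (sinc (u / 5)) ^ 4.

Lemma K_cont u : continuity_pt K u.
Proof.
  unfold K. apply (continuity_pt_comp (fun u => sinc (u/5)) (fun s => s^4)).
  - apply (continuity_pt_comp (fun u => u/5) sinc). apply cont_derive. auto_derive. auto. apply sinc_cont.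
  - apply cont_derive. auto_derive. auto.
Qed.

Lemma K_nonneg u : 0 <= K u.
Proof. unfold K. replace (sinc (u/5) ^4) with ((sinc (u/5)^2)^2) by ring. apply pow2_ge_0. Qed.

Lemma K_le1 u : K u <= 1.
Proof.
  unfold K. pose proof (sinc_abs (u/5)). pose proof (Rabs_pos (sinc (u/5))).
  rewrite <- (pow2_abs (sinc (u/5))) at 1 || idtac.
  replace (sinc (u/5) ^4) with (Rabs (sinc (u/5))^4).
  2:{ replace 4%nat with (2*2)%nat by lia. rewrite !pow_mult. rewrite pow2_abs. reflexivity. }
  replace 1 with (1^4) by ring. apply pow_incr. lra.
Qed.

Lemma K_even u : K (- u) = K u.
Proof. unfold K. replace (-u/5) with (-(u/5)) by field. now rewrite sinc_even. Qed.

Lemma K_formula u : u <> 0 -> K u = 625 * sin (u/5) ^ 4 / u ^ 4.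
Proof.
  intros Hu. unfold K, sinc. destruct (Req_EM_T (u/5) 0). { exfalso. apply Hu. lra. }
  field. auto.
Qed.

Lemma K_le_inv4 u : u <> 0 -> K u * u^4 <= 625.
Proof.
  intros Hu. rewrite K_formula by auto. unfold Rdiv. rewrite Rmult_assoc, Rinv_l.
  2: { apply pow_nonzero; auto. }
  pose proof (SIN_bound (u/5)). assert (sin (u/5)^4 <= 1).
  { replace (sin (u/5)^4) with ((sin (u/5)^2)^2) by ring.
    assert (0 <= sin (u/5)^2 <= 1) by nra. nra. }
  lra.
Qed.

Lemma K_lower u : Rabs u <= 1 -> 1/16 <= K u.
Proof.
  intros H. unfold K. assert (1/2 <= sinc (u/5)).
  { apply sinc_lower. unfold Rdiv. rewrite Rabs_mult, Rabs_inv, (Rabs_pos_eq 5) by lra. lra. }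
  replace (1/16) with ((1/2)^4) by field. apply pow_incr. lra.
Qed.

Lemma K_maj_gen u p : 0 <= p <= 1 \/ p = Rabs u -> Rabs u * p * K u <= 1250 / (1 + u * u).
Proof.
  intros Hp.
  pose proof (K_nonneg u) as H0. pose proof (K_le1 u) as H1.
  assert (Hpos: 0 < 1 + u*u) by nra.
  apply (Rmult_le_reg_r (1 + u*u)); auto.
  replace (1250 / (1 + u * u) * (1 + u * u)) with 1250 by (field; lra).
  assert (Hu2 : u * u = Rabs u * Rabs u) by (rewrite <- Rabs_mult; rewrite Rabs_pos_eq; nra).
  assert (Hu0 : u <> 0 \/ Rabs u = 0). { destruct (Req_dec u 0). right; subst; apply Rabs_R0. now left. }
  pose proof (Rabs_pos u) as Ha. remember (Rabs u) as a eqn:Ea.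
  rewrite Hu2.
  destruct (Rle_dec a 1).
  - assert (0 <= p <= 1). { destruct Hp as [Hp|Hp]. exact Hp. rewrite Hp. split; lra. }
    assert (a * p <= 1) by nra. assert (a*p*K u <= 1) by nra. nra.
  - assert (u <> 0). { destruct Hu0; auto. lra. }
    pose proof (K_le_inv4 u H). replace (u^4) with ((u*u)*(u*u)) in H2 by ring. rewrite Hu2 in H2.
    assert (p <= a) by (destruct Hp; lra).
    assert (0 <= p) by (destruct Hp; lra).
    assert (a*p*K u <= a*a*K u) by (apply Rmult_le_compat_r; auto; nra).
    assert (0 <= a*a*K u) by (apply Rmult_le_pos; nra).
    assert (1 <= a*a) by nra.
    assert (a*a*K u*(1+a*a) <= 2*(a*a*K u*(a*a))) by nra.
    assert (a*p*K u*(1+a*a) <= a*a*K u*(1+a*a)) by (apply Rmult_le_compat_r; nra).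
    nra.
Qed.

Lemma K_maj1 u : Rabs u * K u <= 1250 / (1 + u * u).
Proof. pose proof (K_maj_gen u 1 ltac:(lra)). lra. Qed.

Lemma K_maj2 u : u * u * K u <= 1250 / (1 + u * u).
Proof. pose proof (K_maj_gen u (Rabs u) ltac:(auto)).
  replace (u*u*K u) with (Rabs u * Rabs u * K u). lra. rewrite <- Rabs_mult, Rabs_pos_eq; nra. Qed.

Lemma K_maj0 u : K u <= 1250 / (1 + u * u).
Proof.
  destruct (Rle_dec (Rabs u) 1).
  - pose proof (K_le1 u). assert (u*u <= 1). { rewrite <- (Rabs_pos_eq (u*u)) by nra. rewrite Rabs_mult. pose proof (Rabs_pos u). nra. }
    apply (Rmult_le_reg_r (1 + u*u)). nra. replace (1250 / (1 + u * u) * (1 + u * u)) with 1250 by (field; nra).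
    pose proof (K_nonneg u). nra.
  - pose proof (K_maj1 u). pose proof (K_nonneg u). nra.
Qed.

Lemma int_maj R : 0 <= R -> RInt (fun u => 1250 / (1 + u*u)) (-R) R <= 5000.
Proof.
  intros HR.
  assert (Hd: forall x, Rmin (-R) R <= x <= Rmax (-R) R -> is_derive (fun x => 1250 * atan x) x (1250 / (1+x*x))).
  { intros x _. auto_derive. auto. unfold Rsqr. field. nra. }
  pose proof (is_RInt_derive _ _ (-R) R Hd) as Hi.
  rewrite (is_RInt_unique _ _ _ _ (Hi ltac:(intros x _; apply continuity_pt_filterlim; apply cont_derive; auto_derive; nra))).
  unfold minus, plus, opp; simpl. rewrite atan_opp.
  pose proof (atan_bound R). pose proof PI_4. lra.
Qed.


Lemma abs_le_iff x b : Rabs x <= b <-> -b <= x <= b.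
Proof. unfold Rabs; destruct (Rcase_abs x); split; intros; lra. Qed.
Lemma abs_le_intro x b : -b <= x <= b -> Rabs x <= b.
Proof. apply abs_le_iff. Qed.
Lemma abs_le_elim x b : Rabs x <= b -> -b <= x <= b.
Proof. apply abs_le_iff. Qed.

Lemma INR_fact_eq n z : Z.of_nat (Factorial.fact n) = z -> INR (Factorial.fact n) = IZR z.
Proof. intros H. rewrite INR_IZR_INZ, H. reflexivity. Qed.

Lemma cos_approx3 x : cos_approx x 3 = 1 - x^2/2 + x^4/24 - x^6/720.
Proof.
  unfold cos_approx. simpl sum_f_R0. unfold cos_term.
  rewrite (INR_fact_eq (2*3) 720) by (vm_compute; reflexivity).
  rewrite (INR_fact_eq (2*2) 24) by (vm_compute; reflexivity).
  rewrite (INR_fact_eq (2*1) 2) by (vm_compute; reflexivity).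
  rewrite (INR_fact_eq (2*0) 1) by (vm_compute; reflexivity).
  simpl pow. field.
Qed.

Lemma cos_approx4 x : cos_approx x 4 = 1 - x^2/2 + x^4/24 - x^6/720 + x^8/40320.
Proof.
  unfold cos_approx. simpl sum_f_R0. unfold cos_term.
  rewrite (INR_fact_eq (2*4) 40320) by (vm_compute; reflexivity).
  rewrite (INR_fact_eq (2*3) 720) by (vm_compute; reflexivity).
  rewrite (INR_fact_eq (2*2) 24) by (vm_compute; reflexivity).
  rewrite (INR_fact_eq (2*1) 2) by (vm_compute; reflexivity).
  rewrite (INR_fact_eq (2*0) 1) by (vm_compute; reflexivity).
  simpl pow. field.
Qed.

Definition psi4 (x : R) : R := if Req_EM_T x 0 then / 24 else (cos x - 1 + x^2/2) / x^4.

Lemma psi4_cont x : continuity_pt psi4 x.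
Proof.
  apply cont_if0.
  - intros Hx. apply cont_derive. auto_derive. repeat apply Rmult_integral_contrapositive_currified; auto; lra.
  - intros eps Heps. exists (Rmin 1 eps). split. { apply Rmin_glb_lt; lra. }
    intros y Hy Hy2. pose proof (Rmin_l 1 eps). pose proof (Rmin_r 1 eps).
    assert (Hb: - PI / 2 <= y <= PI/2).
    { assert (Rabs y <= PI/2) by (pose proof PI2_1; lra). apply abs_le_elim in H1.
      replace (- PI / 2) with (- (PI/2)) by field. lra. }
    destruct Hb as [Hb1 Hb2].
    pose proof (cos_bound y 1 Hb1 Hb2) as [Hl Hu]. simpl in Hl, Hu.
    rewrite cos_approx3 in Hl. rewrite cos_approx4 in Hu.
    assert (Hy4 : 0 < y^4). { replace (y^4) with ((y*y)*(y*y)) by ring. assert (0 < y*y) by (apply Rsqr_pos_lt; auto). nra. }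
    assert (E : (cos y - 1 + y ^ 2 / 2) / y ^ 4 - / 24 = (cos y - 1 + y^2/2 - y^4/24) / y^4) by (field; lra).
    rewrite E. unfold Rdiv. rewrite Rabs_mult, Rabs_inv, (Rabs_pos_eq (y^4)) by lra.
    assert (Hyy : y*y < eps). {  
      assert (Rabs y < 1) by lra. assert (Hq: Rabs y * Rabs y < eps). { pose proof (Rabs_pos y). nra. }
      rewrite <- Rabs_mult in Hq. rewrite Rabs_pos_eq in Hq by nra. exact Hq. }
    assert (Rabs (cos y - 1 + y ^ 2 / 2 - y ^ 4 / 24) <= y^4 * (y*y)).
    { apply abs_le_intro. assert (0 <= y*y <= 1).
      { split. nra. assert (Hq: Rabs y * Rabs y <= 1) by (pose proof (Rabs_pos y); nra).
        rewrite <- Rabs_mult in Hq. rewrite Rabs_pos_eq in Hq by nra. exact Hq. }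
      replace (y^6) with (y^4*(y*y)) in * by ring. replace (y^8) with (y^4*(y*y)*(y*y)) in * by ring.
      split; nra. }
    apply Rle_lt_trans with (y^4*(y*y) * / y^4).
    + apply Rmult_le_compat_r; auto. left; apply Rinv_0_lt_compat; auto.
    + replace (y ^ 4 * (y * y) * / y ^ 4) with (y*y) by (field; lra). lra.
Qed.

Lemma psi4_even x : psi4 (- x) = psi4 x.
Proof.
  unfold psi4. destruct (Req_EM_T (-x) 0), (Req_EM_T x 0); try lra.
  rewrite cos_neg. replace ((-x)^2) with (x^2) by ring. replace ((-x)^4) with (x^4) by ring. reflexivity.
Qed.

Lemma psi4_bound x : 2 <= Rabs x -> Rabs (psi4 x) <= / (x * x).
Proof.
  intros H. unfold psi4. destruct (Req_EM_T x 0). { subst. rewrite Rabs_R0 in H. lra. }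
  assert (Hxx : x * x = Rabs x * Rabs x) by (rewrite <- Rabs_mult, Rabs_pos_eq; nra).
  assert (4 <= x*x) by nra.
  assert (Hx4 : 0 < x^4) by (replace (x^4) with ((x*x)*(x*x)) by ring; nra).
  unfold Rdiv. rewrite Rabs_mult, Rabs_inv, (Rabs_pos_eq (x^4)) by lra.
  pose proof (COS_bound x).
  assert (Rabs (cos x - 1 + x ^ 2 / 2) <= x*x). { apply abs_le_intro. simpl. split; nra. }
  apply Rle_trans with (x*x * / x^4).
  - apply Rmult_le_compat_r; auto. left; apply Rinv_0_lt_compat; auto.
  - right. field. lra.
Qed.

Lemma trig5 u e :
  sin (u/5) ^ 4 * cos (e*u) = 3/8*cos (e*u) - 1/4*cos ((e+2/5)*u) - 1/4*cos ((e-2/5)*u)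
    + 1/16*cos ((e+4/5)*u) + 1/16*cos ((e-4/5)*u).
Proof.
  set (a := u/5). set (y := e*u).
  replace ((e+2/5)*u) with (y + 2*a) by (unfold a, y; field).
  replace ((e-2/5)*u) with (y - 2*a) by (unfold a, y; field).
  replace ((e+4/5)*u) with (y + 2*(2*a)) by (unfold a, y; field).
  replace ((e-4/5)*u) with (y - 2*(2*a)) by (unfold a, y; field).
  rewrite !cos_plus, !cos_minus. rewrite (cos_2a_cos (2*a)).
  replace (sin a ^4) with ((sin a * sin a)^2) by ring.
  assert (E : sin a * sin a = (1 - cos (2*a))/2) by (rewrite cos_2a_sin; field).
  rewrite E. clearbody a y. field.
Qed.


Definition Iint (e W : R) : R := RInt (fun u => K u * cos (e * u)) (-W) W.
Definition Phi (Y : R) : R := RInt psi4 (-Y) Y.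

Lemma cont_const c x : continuity_pt (fun _ => c) x.
Proof. apply continuity_pt_const. intros a b; reflexivity. Qed.

Lemma cont_psib b x : continuity_pt (fun u => b^4 * psi4 (b*u)) x.
Proof.
  apply (continuity_pt_mult (fun _ => b^4) (fun u => psi4 (b*u))). apply cont_const.
  apply (continuity_pt_comp (fun u => b*u) psi4). apply cont_derive; auto_derive; auto. apply psi4_cont.
Qed.

Lemma RInt_lin5 (f1 f2 f3 f4 f5 : R -> R) c1 c2 c3 c4 c5 a b :
  (forall x, continuity_pt f1 x) -> (forall x, continuity_pt f2 x) -> (forall x, continuity_pt f3 x) ->
  (forall x, continuity_pt f4 x) -> (forall x, continuity_pt f5 x) ->
  RInt (fun u => c1*f1 u + c2*f2 u + c3*f3 u + c4*f4 u + c5*f5 u) a b =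
  c1 * RInt f1 a b + c2 * RInt f2 a b + c3 * RInt f3 a b + c4 * RInt f4 a b + c5 * RInt f5 a b.
Proof.
  intros H1 H2 H3 H4 H5.
  assert (C: forall c f, (forall x, continuity_pt f x) -> forall x, continuity_pt (fun u => c * f u) x).
  { intros c f Hf x. apply (continuity_pt_mult (fun _ => c) f). apply cont_const. auto. }
  assert (P: forall f g, (forall x, continuity_pt f x) -> (forall x, continuity_pt g x) -> forall x, continuity_pt (fun u => f u + g u) x).
  { intros f g Hf Hg x. apply (continuity_pt_plus f g); auto. }
  rewrite (RInt_add (fun u => c1*f1 u + c2*f2 u + c3*f3 u + c4*f4 u) (fun u => c5 * f5 u)).
  rewrite (RInt_add (fun u => c1*f1 u + c2*f2 u + c3*f3 u) (fun u => c4 * f4 u)).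
  rewrite (RInt_add (fun u => c1*f1 u + c2*f2 u) (fun u => c3 * f3 u)).
  rewrite (RInt_add (fun u => c1*f1 u) (fun u => c2 * f2 u)).
  rewrite !RInt_mulc. reflexivity.
  all: apply exRg; repeat (apply P || apply C); auto.
Qed.

Lemma psi_eval b u : b <> 0 -> u <> 0 -> b^4 * psi4 (b*u) = (cos (b*u) - 1 + b^2*u^2/2) / u^4.
Proof.
  intros Hb Hu. unfold psi4. destruct (Req_EM_T (b*u) 0) as [E|E].
  { apply Rmult_integral in E. tauto. }
  field. auto.
Qed.

Lemma Kcos_formula e u : 1 <= e ->
  K u * cos (e*u) = 625*3/8 * (e^4 * psi4 (e*u)) + (-625/4) * ((e+2/5)^4 * psi4 ((e+2/5)*u))
    + (-625/4) * ((e-2/5)^4 * psi4 ((e-2/5)*u)) + 625/16 * ((e+4/5)^4 * psi4 ((e+4/5)*u))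
    + 625/16 * ((e-4/5)^4 * psi4 ((e-4/5)*u)).
Proof.
  intros He. destruct (Req_dec u 0) as [Hu|Hu].
  - subst u. rewrite !Rmult_0_r. unfold K, psi4, sinc.
    destruct (Req_EM_T 0 0); [|lra].
    destruct (Req_EM_T (0/5) 0) as [_|n]; [| exfalso; apply n; field].
    rewrite cos_0. field.
  - rewrite !psi_eval by (auto; lra). rewrite K_formula by auto.
    assert (T := trig5 u e).
    replace (625 * sin (u / 5) ^ 4 / u ^ 4 * cos (e * u)) with (625 / u^4 * (sin (u / 5) ^ 4 * cos (e * u))) by (field; auto).
    rewrite T. field. auto.
Qed.

Lemma term_int b W : 0 < b -> RInt (fun u => b^4 * psi4 (b*u)) (-W) W = b^3 * Phi (b*W).
Proof.
  intros Hb.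
  rewrite (RInt_extR _ (fun u => b^3 * (b * psi4 (b*u + 0)))).
  2:{ intros x _. rewrite Rplus_0_r. ring. }
  rewrite RInt_mulc.
  2:{ apply exRg. intros x. apply (continuity_pt_mult (fun _ => b) (fun u => psi4 (b*u+0))). apply cont_const.
      apply (continuity_pt_comp (fun u => b*u+0) psi4). apply cont_derive; auto_derive; auto. apply psi4_cont. }
  f_equal. unfold Phi.
  pose proof (RInt_comp_lin psi4 b 0 (-W) W) as H.
  rewrite !Rplus_0_r in H. replace (b * - W) with (- (b*W)) in H by ring.
  rewrite <- H. 2: { apply exRg. apply psi4_cont. }
  apply RInt_extR. intros x _. rewrite Rplus_0_r. reflexivity.
Qed.

Lemma Iint_formula e W : 1 <= e ->
  Iint e W = 625*3/8 * (e^3 * Phi (e*W)) + (-625/4) * ((e+2/5)^3 * Phi ((e+2/5)*W))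
    + (-625/4) * ((e-2/5)^3 * Phi ((e-2/5)*W)) + 625/16 * ((e+4/5)^3 * Phi ((e+4/5)*W))
    + 625/16 * ((e-4/5)^3 * Phi ((e-4/5)*W)).
Proof.
  intros He. unfold Iint.
  rewrite (RInt_extR _ (fun u => 625*3/8 * (e^4 * psi4 (e*u)) + (-625/4) * ((e+2/5)^4 * psi4 ((e+2/5)*u))
    + (-625/4) * ((e-2/5)^4 * psi4 ((e-2/5)*u)) + 625/16 * ((e+4/5)^4 * psi4 ((e+4/5)*u))
    + 625/16 * ((e-4/5)^4 * psi4 ((e-4/5)*u)))).
  2: { intros x _. apply Kcos_formula; auto. }
  rewrite (RInt_lin5 (fun u => e^4 * psi4 (e*u)) (fun u => (e+2/5)^4 * psi4 ((e+2/5)*u))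
     (fun u => (e-2/5)^4 * psi4 ((e-2/5)*u)) (fun u => (e+4/5)^4 * psi4 ((e+4/5)*u))
     (fun u => (e-4/5)^4 * psi4 ((e-4/5)*u))); try (intros; apply cont_psib).
  rewrite !term_int by lra. reflexivity.
Qed.

Lemma RInt_bound_invsq (f : R -> R) c a b : 0 <= c -> 0 < a <= b \/ a <= b < 0 ->
  (forall x, Rmin a b <= x <= Rmax a b -> continuity_pt f x) ->
  (forall x, a < x < b -> Rabs (f x) <= c * / (x*x)) -> Rabs (RInt f a b) <= c * (/ a - / b).
Proof.
  intros Hc Hab Hf H.
  rewrite <- RInt_invsq by auto. rewrite <- RInt_mulc.
  apply RInt_bound; auto. lra. apply exR; auto.
  all: apply exR; intros x Hx; rewrite Rmin_left in Hx by lra; rewrite Rmax_right in Hx by lra;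
     try (apply (continuity_pt_mult (fun _ => c))); try apply cont_const;
     apply cont_derive; auto_derive; assert (x <> 0) by lra; auto; apply Rmult_integral_contrapositive_currified; auto.
Qed.


Lemma RInt_chas (f : R -> R) a b c : ex_RInt f a b -> ex_RInt f b c ->
  RInt f a b + RInt f b c = RInt f a c.
Proof. intros. apply (RInt_Chasles f a b c); auto. Qed.

Lemma Phi_diff_ord Y0 Y1 Y2 : 2 <= Y0 -> Y0 <= Y2 <= Y1 -> Rabs (Phi Y1 - Phi Y2) <= 2 / Y0.
Proof.
  intros H0 H12. unfold Phi.
  assert (E : forall a b, ex_RInt psi4 a b) by (intros; apply exRg; apply psi4_cont).
  rewrite <- (RInt_chas psi4 (-Y1) (-Y2) Y1) by auto.
  rewrite <- (RInt_chas psi4 (-Y2) Y2 Y1) by auto.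
  assert (A1 : Rabs (RInt psi4 (-Y1) (-Y2)) <= 1 * (/ (-Y1) - / (-Y2))).
  { apply RInt_bound_invsq; try lra. intros; apply psi4_cont.
    intros x Hx. rewrite Rmult_1_l. apply psi4_bound. rewrite Rabs_left by lra. lra. }
  assert (A2 : Rabs (RInt psi4 Y2 Y1) <= 1 * (/ Y2 - / Y1)).
  { apply RInt_bound_invsq; try lra. intros; apply psi4_cont.
    intros x Hx. rewrite Rmult_1_l. apply psi4_bound. rewrite Rabs_pos_eq by lra. lra. }
  rewrite !Rinv_opp in A1.
  assert (/ Y1 > 0) by (apply Rinv_0_lt_compat; lra).
  assert (/ Y2 <= / Y0) by (apply Rinv_le_contravar; lra).
  apply abs_le_elim in A1. apply abs_le_elim in A2. apply abs_le_intro.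
  unfold Rdiv. lra.
Qed.

Lemma Phi_diff Y0 Y1 Y2 : 2 <= Y0 -> Y0 <= Y1 -> Y0 <= Y2 -> Rabs (Phi Y1 - Phi Y2) <= 2 / Y0.
Proof.
  intros H0 H1 H2. destruct (Rle_dec Y2 Y1).
  - apply Phi_diff_ord; lra.
  - rewrite Rabs_minus_sym. apply Phi_diff_ord; lra.
Qed.

Lemma abs_mul_le x X y Y : Rabs x <= X -> 0 <= y <= Y -> Rabs (y * x) <= Y * X.
Proof.
  intros Hx Hy. rewrite Rabs_mult, Rabs_pos_eq by lra.
  apply Rmult_le_compat; try lra. apply Rabs_pos.
Qed.

Lemma I_bound_large e W : 1 <= e -> 10 <= W -> Rabs (Iint e W) <= 6250 * (e+1)^3 / W.
Proof.
  intros He HW. rewrite Iint_formula by auto.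
  set (P0 := Phi (e*W)). set (P1 := Phi ((e+2/5)*W)). set (P2 := Phi ((e-2/5)*W)).
  set (P3 := Phi ((e+4/5)*W)). set (P4 := Phi ((e-4/5)*W)).
  assert (Y0: 2 <= W/5) by lra.
  assert (HD : forall b, 1/5 <= b -> Rabs (Phi (b*W) - P0) <= 2 / (W/5)).
  { intros b Hb. apply Phi_diff; try lra; nra. }
  pose proof (HD (e+2/5) ltac:(lra)) as D1. pose proof (HD (e-2/5) ltac:(lra)) as D2.
  pose proof (HD (e+4/5) ltac:(lra)) as D3. pose proof (HD (e-4/5) ltac:(lra)) as D4.
  fold P1 in D1. fold P2 in D2. fold P3 in D3. fold P4 in D4.
  assert (Hb : forall b, 0 <= b <= e+1 -> 0 <= b^3 <= (e+1)^3).
  { intros b Hb. split. apply pow_le; lra. apply pow_incr; lra. }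
  pose proof (abs_mul_le _ _ _ _ D1 (Hb (e+2/5) ltac:(lra))) as T1.
  pose proof (abs_mul_le _ _ _ _ D2 (Hb (e-2/5) ltac:(lra))) as T2.
  pose proof (abs_mul_le _ _ _ _ D3 (Hb (e+4/5) ltac:(lra))) as T3.
  pose proof (abs_mul_le _ _ _ _ D4 (Hb (e-4/5) ltac:(lra))) as T4.
  apply abs_le_elim in T1, T2, T3, T4.
  clearbody P0 P1 P2 P3 P4.
  replace (625 * 3 / 8 * (e ^ 3 * P0) + -625 / 4 * ((e + 2 / 5) ^ 3 * P1) +
           -625 / 4 * ((e - 2 / 5) ^ 3 * P2) + 625 / 16 * ((e + 4 / 5) ^ 3 * P3) +
           625 / 16 * ((e - 4 / 5) ^ 3 * P4))
    with (-625 / 4 * ((e + 2 / 5) ^ 3 * (P1 - P0)) +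
           -625 / 4 * ((e - 2 / 5) ^ 3 * (P2 - P0)) + 625 / 16 * ((e + 4 / 5) ^ 3 * (P3 - P0)) +
           625 / 16 * ((e - 4 / 5) ^ 3 * (P4 - P0))) by field.
  replace (6250 * (e + 1) ^ 3 / W) with (625 * ((e+1)^3 * (2/(W/5)))) by (field; lra).
  set (Z := (e+1)^3 * (2/(W/5))) in *.
  apply abs_le_intro. lra.
Qed.

Lemma le_of_forall_large x a C W0 : 0 <= C -> 0 < W0 -> (forall W, W0 <= W -> x <= a + C / W) -> x <= a.
Proof.
  intros HC HW0 H. destruct (Rle_dec x a) as [|n]; auto. exfalso.
  set (W := W0 + 2 * C / (x - a)).
  assert (0 <= 2 * C / (x - a)) by (apply Rdiv_le_0_compat; lra).
  specialize (H W ltac:(unfold W; lra)).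
  assert (C / W <= (x-a)/2).
  { assert (HWp : 0 < W) by (unfold W; lra).
    assert (E1 : (x-a)/2 * W = (x-a)*W0/2 + C) by (unfold W; field; lra).
    assert (E2 : C / W * W = C) by (field; lra).
    apply (Rmult_le_reg_r W); auto. rewrite E1, E2. nra. }
  lra.
Qed.

Lemma Kcos_cont e x : continuity_pt (fun u => K u * cos (e*u)) x.
Proof.
  apply (continuity_pt_mult K (fun u => cos (e*u))). apply K_cont.
  apply cont_derive. auto_derive. auto.
Qed.

Lemma Kcos_invsq e x : 1 <= Rabs x -> Rabs (K x * cos (e*x)) <= 625 * / (x*x).
Proof.
  intros Hx. assert (x <> 0) by (intro; subst; rewrite Rabs_R0 in Hx; lra).
  pose proof (K_le_inv4 x H). pose proof (K_nonneg x). pose proof (COS_bound (e*x)).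
  rewrite Rabs_mult, (Rabs_pos_eq (K x)) by auto.
  assert (Hxx : x*x = Rabs x * Rabs x) by (rewrite <- Rabs_mult, Rabs_pos_eq; nra).
  assert (1 <= x*x) by nra.
  replace (x^4) with ((x*x)*(x*x)) in H0 by ring.
  assert (K x * (x*x) <= 625).
  { assert (K x * (x*x) <= K x * (x*x) * (x*x)) by (assert (0 <= K x * (x*x)) by nra; nra). nra. }
  assert (Rabs (cos (e*x)) <= 1) by (apply abs_le_intro; lra).
  apply Rle_trans with (K x * 1). { apply Rmult_le_compat_l; auto. }
  apply (Rmult_le_reg_r (x*x)). lra. replace (625 * / (x*x) * (x*x)) with 625 by (field; lra). lra.
Qed.

Lemma Icos_small_pos e W : 1 <= e -> 1 <= W -> Rabs (Iint e W) <= 1250 / W.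
Proof.
  intros He HW. apply abs_le_intro.
  assert (Hkey : forall W', Rmax W 10 <= W' -> Rabs (Iint e W) <= 1250 / W + 6250 * (e+1)^3 / W').
  { intros W' HW'. pose proof (Rmax_l W 10). pose proof (Rmax_r W 10).
    assert (E : forall a b, ex_RInt (fun u => K u * cos (e*u)) a b) by (intros; apply exRg; apply Kcos_cont).
    assert (Hs : Iint e W' = RInt (fun u => K u * cos (e*u)) (-W') (-W) + Iint e W + RInt (fun u => K u * cos (e*u)) W W').
    { unfold Iint. rewrite RInt_chas by auto. rewrite RInt_chas by auto. reflexivity. }
    assert (A1 : Rabs (RInt (fun u => K u * cos (e*u)) (-W') (-W)) <= 625 * (/ (-W') - / (-W))).
    { apply RInt_bound_invsq; try lra. intros; apply Kcos_cont.
      intros x Hx. apply Kcos_invsq. rewrite Rabs_left by lra. lra. }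
    assert (A2 : Rabs (RInt (fun u => K u * cos (e*u)) W W') <= 625 * (/ W - / W')).
    { apply RInt_bound_invsq; try lra. intros; apply Kcos_cont.
      intros x Hx. apply Kcos_invsq. rewrite Rabs_pos_eq by lra. lra. }
    rewrite !Rinv_opp in A1.
    pose proof (I_bound_large e W' He ltac:(lra)) as A3.
    assert (/ W' > 0) by (apply Rinv_0_lt_compat; lra).
    apply abs_le_elim in A1, A2, A3. apply abs_le_intro. unfold Rdiv in *. lra. }
  assert (Hp : 0 <= 6250 * (e+1)^3) by (apply Rmult_le_pos; [lra| apply pow_le; lra]).
  split.
  - assert (- Iint e W <= 1250 / W).
    { apply (le_of_forall_large _ _ (6250 * (e+1)^3) (Rmax W 10)); auto.
      pose proof (Rmax_r W 10); lra.
      intros W' HW'. specialize (Hkey W' HW'). apply abs_le_elim in Hkey. unfold Rdiv in *; lra. }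
    lra.
  - apply (le_of_forall_large _ _ (6250 * (e+1)^3) (Rmax W 10)); auto.
    pose proof (Rmax_r W 10); lra.
    intros W' HW'. specialize (Hkey W' HW'). apply abs_le_elim in Hkey. unfold Rdiv in *; lra.
Qed.

Lemma Iint_even e W : Iint (-e) W = Iint e W.
Proof.
  unfold Iint. apply RInt_extR. intros x _. replace (-e*x) with (-(e*x)) by ring. now rewrite cos_neg.
Qed.

Lemma Icos_small e W : 1 <= Rabs e -> 1 <= W -> Rabs (Iint e W) <= 1250 / W.
Proof.
  intros He HW. destruct (Rle_dec 0 e).
  - rewrite Rabs_pos_eq in He by lra. apply Icos_small_pos; auto.
  - rewrite Rabs_left in He by lra. rewrite <- Iint_even. apply Icos_small_pos; auto.
Qed.

Lemma RInt_odd (f : R -> R) W : (forall x, continuity_pt f x) -> (forall x, f (-x) = - f x) ->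
  RInt f (-W) W = 0.
Proof.
  intros Hc Ho.
  pose proof (RInt_comp_lin f (-1) 0 (-W) W (exRg _ _ _ Hc)) as H.
  replace (-1 * -W + 0) with W in H by ring. replace (-1 * W + 0) with (-W) in H by ring.
  assert (H2 : RInt f (-W) W = RInt f W (-W)).
  { rewrite <- H. apply RInt_extR. intros x _. replace (-1*x+0) with (-x) by ring. rewrite Ho. unfold scal; simpl. unfold mult; simpl. ring. }
  pose proof (opp_RInt_swap f (-W) W (exRg _ _ _ Hc)) as H3.
  rewrite <- H3 in H2. unfold opp in H2; simpl in H2. lra.
Qed.

Lemma Isin_zero e W : RInt (fun u => K u * sin (e*u)) (-W) W = 0.
Proof.
  apply RInt_odd.
  - intros x. apply (continuity_pt_mult K (fun u => sin (e*u))). apply K_cont. apply cont_derive; auto_derive; auto.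
  - intros x. rewrite K_even. replace (e * -x) with (-(e*x)) by ring. rewrite sin_neg. ring.
Qed.

Lemma I0_pos W : 1 <= W -> 1/8 <= Iint 0 W.
Proof.
  intros HW. unfold Iint.
  assert (E : forall a b, ex_RInt (fun u => K u * cos (0*u)) a b) by (intros; apply exRg; apply Kcos_cont).
  rewrite <- (RInt_chas _ (-W) (-1) W) by auto. rewrite <- (RInt_chas _ (-1) 1 W) by auto.
  assert (Hk : forall x, K x * cos (0*x) = K x) by (intros; rewrite Rmult_0_l, cos_0; ring).
  assert (G1 : 0 <= RInt (fun u => K u * cos (0*u)) (-W) (-1)).
  { apply RInt_ge_0; auto. lra. intros; rewrite Hk; apply K_nonneg. }
  assert (G2 : 0 <= RInt (fun u => K u * cos (0*u)) 1 W).
  { apply RInt_ge_0; auto. intros; rewrite Hk; apply K_nonneg. }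
  assert (G3 : RInt (fun _ => 1/16) (-1) 1 <= RInt (fun u => K u * cos (0*u)) (-1) 1).
  { apply RInt_le; auto. lra. apply exRg; intros; apply cont_const.
    intros x Hx. rewrite Hk. apply K_lower. apply abs_le_intro; lra. }
  rewrite RInt_cst in G3. lra.
Qed.


Definition Prod (a b mu c d nu W : R) : R :=
  RInt (fun u => K u * ((a*cos (mu*u) + b*sin (mu*u)) * (c*cos (nu*u) + d*sin (nu*u)))) (-W) W.

Lemma Ksin_cont e x : continuity_pt (fun u => K u * sin (e*u)) x.
Proof.
  apply (continuity_pt_mult K (fun u => sin (e*u))). apply K_cont.
  apply cont_derive. auto_derive. auto.
Qed.

Lemma Prod_eq a b mu c d nu W :
  Prod a b mu c d nu W = (a*c+b*d)/2 * Iint (mu-nu) W + (a*c-b*d)/2 * Iint (mu+nu) W.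
Proof.
  unfold Prod, Iint.
  rewrite (RInt_extR _ (fun u => (a*c+b*d)/2 * (K u * cos ((mu-nu)*u)) + (a*c-b*d)/2 * (K u * cos ((mu+nu)*u))
       + (b*c-a*d)/2 * (K u * sin ((mu-nu)*u)) + (a*d+b*c)/2 * (K u * sin ((mu+nu)*u)) + 0 * (fun _ => 0) u)).
  2: { intros x _. replace ((mu-nu)*x) with (mu*x - nu*x) by ring. replace ((mu+nu)*x) with (mu*x + nu*x) by ring.
       rewrite cos_minus, cos_plus, sin_minus, sin_plus. field. }
  rewrite (RInt_lin5 (fun u => K u * cos ((mu-nu)*u)) (fun u => K u * cos ((mu+nu)*u))
     (fun u => K u * sin ((mu-nu)*u)) (fun u => K u * sin ((mu+nu)*u)) (fun _ => 0));
   try (intros; apply Kcos_cont); try (intros; apply Ksin_cont); try (intros; apply cont_const).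
  rewrite !Isin_zero. field.
Qed.

Lemma abs_le_sq x y : 0 <= y -> x * x <= y * y -> Rabs x <= y.
Proof. intros Hy H. apply abs_le_intro. split; nra. Qed.

Lemma CS2 a b c d : (a*c+b*d)*(a*c+b*d) <= (a*a+b*b)*(c*c+d*d).
Proof. pose proof (pow2_ge_0 (a*d-b*c)). nra. Qed.

Lemma Prod_bound a b mu c d nu W p q : 0 <= p -> 0 <= q -> a*a+b*b <= p*p -> c*c+d*d <= q*q ->
  1 <= Rabs (mu - nu) -> 1 <= Rabs (mu + nu) -> 1 <= W ->
  Rabs (Prod a b mu c d nu W) <= p * q * (1250 / W).
Proof.
  intros Hp Hq Hab Hcd H1 H2 HW. rewrite Prod_eq.
  pose proof (Icos_small _ _ H1 HW) as I1. pose proof (Icos_small _ _ H2 HW) as I2.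
  assert (PQ : (a*a+b*b)*(c*c+d*d) <= (p*p)*(q*q)) by (apply Rmult_le_compat; nra).
  assert (A1 : Rabs (a*c+b*d) <= p*q).
  { apply abs_le_sq. nra. pose proof (CS2 a b c d). nra. }
  assert (A2 : Rabs (a*c-b*d) <= p*q).
  { apply abs_le_sq. nra. pose proof (CS2 a (-b) c d). nra. }
  pose proof (abs_mul_le _ _ _ _ I1 (conj (Rabs_pos (a*c+b*d)) A1)) as B1.
  pose proof (abs_mul_le _ _ _ _ I2 (conj (Rabs_pos (a*c-b*d)) A2)) as B2.
  rewrite Rabs_mult, Rabs_Rabsolu, <- Rabs_mult in B1, B2.
  apply abs_le_elim in B1, B2. apply abs_le_intro.
  set (T := 1250 / W) in *. clearbody T.
  set (X := Iint (mu - nu) W) in *. set (Y := Iint (mu + nu) W) in *. clearbody X Y.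
  split; lra.
Qed.

Lemma Prod_main a b mu W : 1 <= Rabs (2*mu) -> 1 <= W ->
  (a*a+b*b)/2 * (Iint 0 W - 1250 / W) <= Prod a b mu a b mu W.
Proof.
  intros H HW. rewrite Prod_eq. replace (mu - mu) with 0 by ring. replace (mu+mu) with (2*mu) by ring.
  pose proof (Icos_small _ _ H HW) as I2. apply abs_le_elim in I2.
  set (T := 1250 / W) in *. clearbody T.
  set (X := Iint 0 W) in *. set (Y := Iint (2*mu) W) in *. clearbody X Y.
  assert (0 <= a*a) by nra. assert (0 <= b*b) by nra.
  replace ((a*a+b*b)/2 * (X - T)) with ((a*a+b*b)/2 * X - (a*a)/2*T - (b*b)/2*T) by field.
  replace ((a * a + b * b) / 2 * X + (a * a - b * b) / 2 * Y) with ((a * a + b * b) / 2 * X + (a * a)/2 * Y - (b * b) / 2 * Y) by field.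
  nra.
Qed.


Lemma sum_diff_bound (u v : nat -> R) N M : (forall n, Rabs (u n) <= v n) -> (N <= M)%nat ->
  Rabs (sum_f_R0 u M - sum_f_R0 u N) <= sum_f_R0 v M - sum_f_R0 v N.
Proof.
  intros H HNM. induction HNM.
  - rewrite !Rminus_diag, Rabs_R0. lra.
  - simpl. specialize (H (S m)).
    replace (sum_f_R0 u m + u (S m) - sum_f_R0 u N) with ((sum_f_R0 u m - sum_f_R0 u N) + u (S m)) by ring.
    eapply Rle_trans. apply Rabs_triang. lra.
Qed.

Lemma tail_bound (u v : nat -> R) U V N : (forall n, Rabs (u n) <= v n) ->
  infinite_sum u U -> infinite_sum v V -> Rabs (U - sum_f_R0 u N) <= V - sum_f_R0 v N.
Proof.
  intros H HU HV.
  destruct (Rle_dec (Rabs (U - sum_f_R0 u N)) (V - sum_f_R0 v N)) as [|n]; auto. exfalso.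
  set (eps := (Rabs (U - sum_f_R0 u N) - (V - sum_f_R0 v N)) / 2).
  assert (He : eps > 0) by (unfold eps; lra).
  destruct (HU eps He) as [N1 H1]. destruct (HV eps He) as [N2 H2].
  set (M := max N (max N1 N2)).
  specialize (H1 M ltac:(unfold M; lia)). specialize (H2 M ltac:(unfold M; lia)).
  unfold R_dist in H1, H2.
  pose proof (sum_diff_bound u v N M H ltac:(unfold M; lia)).
  assert (Rabs (U - sum_f_R0 u N) <= Rabs (sum_f_R0 u M - U) + Rabs (sum_f_R0 u M - sum_f_R0 u N)).
  { replace (U - sum_f_R0 u N) with (-(sum_f_R0 u M - U) + (sum_f_R0 u M - sum_f_R0 u N)) by ring.
    eapply Rle_trans. apply Rabs_triang. rewrite Rabs_Ropp. lra. }
  assert (sum_f_R0 v M - V < eps) by (destruct (Rabs_def2 _ _ H2); lra).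
  unfold eps in *. lra.
Qed.

Lemma partial_le (v : nat -> R) V N : (forall n, 0 <= v n) -> infinite_sum v V -> sum_f_R0 v N <= V.
Proof.
  intros H HV. pose proof (tail_bound v v V V N ltac:(intros; rewrite Rabs_pos_eq; auto; lra) HV HV).
  pose proof (Rabs_pos (V - sum_f_R0 v N)). lra.
Qed.

Lemma tail_small (v : nat -> R) V eps : infinite_sum v V -> 0 < eps ->
  exists N0, forall N, (N0 <= N)%nat -> V - sum_f_R0 v N < eps.
Proof.
  intros HV He. destruct (HV eps He) as [N0 H]. exists N0. intros N HN.
  specialize (H N HN). unfold R_dist in H. destruct (Rabs_def2 _ _ H). lra.
Qed.

Lemma terms_small (v : nat -> R) V eps : infinite_sum v V -> 0 < eps ->
  exists N0, forall N, (N0 <= N)%nat -> Rabs (v (S N)) < eps.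
Proof.
  intros HV He. destruct (HV (eps/2) ltac:(lra)) as [N0 H]. exists N0. intros N HN.
  pose proof (H N HN). pose proof (H (S N) ltac:(lia)). unfold R_dist in *. simpl in H1.
  destruct (Rabs_def2 _ _ H0). destruct (Rabs_def2 _ _ H1).
  apply Rabs_def1; lra.
Qed.

Definition term (x y lam : nat -> R) (n : nat) (t : R) : R :=
  x n * cos (t * lam n) + y n * sin (t * lam n).

Lemma lin_trig_bound a b z m : a*a + b*b = m*m -> 0 <= m -> Rabs (a * cos z + b * sin z) <= m.
Proof.
  intros H Hm. apply abs_le_sq; auto.
  pose proof (CS2 a b (cos z) (sin z)). pose proof (sin2_cos2 z). unfold Rsqr in *. nra.
Qed.

Lemma term_abs x y lam m n t : x n * x n + y n * y n = m n * m n -> 0 <= m n ->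
  Rabs (term x y lam n t) <= m n.
Proof. intros. apply lin_trig_bound; auto. Qed.

Lemma term_cont x y lam n t : continuity_pt (term x y lam n) t.
Proof. unfold term. apply cont_derive. auto_derive. auto. Qed.

Lemma psum_cont x y lam N t : continuity_pt (fun t => sum_f_R0 (fun n => term x y lam n t) N) t.
Proof.
  induction N.
  - simpl. apply term_cont.
  - simpl. apply (continuity_pt_plus (fun t => sum_f_R0 (fun n => term x y lam n t) N) (term x y lam (S N))); auto.
    apply term_cont.
Qed.

Lemma series_cont x y lam m Ssum F :
  (forall n, x n * x n + y n * y n = m n * m n) -> (forall n, 0 <= m n) -> infinite_sum m Ssum ->
  (forall t, infinite_sum (fun n => term x y lam n t) (F t)) -> continuity F.
Proof.
  intros Hxy Hm HS HF t.
  assert (Hr : 0 < 1) by lra.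
  apply (CVU_continuity (fun N t => sum_f_R0 (fun n => term x y lam n t) N) F t (mkposreal 1 Hr)).
  - intros eps He. destruct (tail_small m Ssum eps HS He) as [N0 H0]. exists N0.
    intros N z HN _. eapply Rle_lt_trans. apply (tail_bound (fun n => term x y lam n z) m (F z) Ssum N); auto.
    intros; apply term_abs; auto. apply H0; auto.
  - intros; apply psum_cont.
  - unfold Boule. simpl. rewrite Rminus_diag, Rabs_R0. lra.
Qed.


Record Setup (m x y lam : nat -> R) (Ssum c0 : R) (F : R -> R) : Prop := mkSetup {
  s_mpos : forall n, 0 < m n;
  s_mono : forall n, m (S n) <= m n;
  s_sum : infinite_sum m Ssum;
  s_xy : forall n, x n * x n + y n * y n = m n * m n;
  s_c : 1 <= c0;
  s_lam : forall n, lam n = (c0 + INR n) / m n;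
  s_F : forall t, infinite_sum (fun n => term x y lam n t) (F t) }.



Lemma m_anti m x y lam Ssum c0 F (H : Setup m x y lam Ssum c0 F) k n : (k <= n)%nat -> m n <= m k.
Proof.
  intros Hkn. induction Hkn. lra. pose proof (s_mono _ _ _ _ _ _ _ H m0). lra.
Qed.

Lemma mlam m x y lam Ssum c0 F (H : Setup m x y lam Ssum c0 F) n : m n * lam n = c0 + INR n.
Proof. rewrite (s_lam _ _ _ _ _ _ _ H). pose proof (s_mpos _ _ _ _ _ _ _ H n). field. lra. Qed.

Lemma lam_pos m x y lam Ssum c0 F (H : Setup m x y lam Ssum c0 F) n : 0 < lam n.
Proof.
  rewrite (s_lam _ _ _ _ _ _ _ H). pose proof (s_mpos _ _ _ _ _ _ _ H n). pose proof (s_c _ _ _ _ _ _ _ H).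
  pose proof (pos_INR n). apply Rdiv_lt_0_compat; lra.
Qed.

Lemma gap m x y lam Ssum c0 F (H : Setup m x y lam Ssum c0 F) k n : k <> n ->
  1 <= Rabs (m n * lam k - m n * lam n).
Proof.
  intros Hkn. pose proof (s_mpos _ _ _ _ _ _ _ H n) as Hn. pose proof (s_mpos _ _ _ _ _ _ _ H k) as Hk.
  pose proof (s_c _ _ _ _ _ _ _ H). rewrite (mlam _ _ _ _ _ _ _ H n).
  rewrite (s_lam _ _ _ _ _ _ _ H k).
  pose proof (pos_INR k). pose proof (pos_INR n).
  destruct (Compare_dec.lt_dec k n) as [Hlt|Hgt].
  - pose proof (m_anti _ _ _ _ _ _ _ H k n ltac:(lia)).
    assert (INR k + 1 <= INR n) by (rewrite <- S_INR; apply le_INR; lia).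
    assert (m n * ((c0 + INR k) / m k) <= c0 + INR k).
    { apply (Rmult_le_reg_r (m k)); auto. replace (m n * ((c0 + INR k) / m k) * m k) with (m n * (c0 + INR k)) by (field; lra). nra. }
    rewrite Rabs_left1 by lra. lra.
  - pose proof (m_anti _ _ _ _ _ _ _ H n k ltac:(lia)).
    assert (INR n + 1 <= INR k) by (rewrite <- S_INR; apply le_INR; lia).
    assert (c0 + INR k <= m n * ((c0 + INR k) / m k)).
    { apply (Rmult_le_reg_r (m k)); auto. replace (m n * ((c0 + INR k) / m k) * m k) with (m n * (c0 + INR k)) by (field; lra). nra. }
    rewrite Rabs_pos_eq by lra. lra.
Qed.

Lemma F_bound m x y lam Ssum c0 F (H : Setup m x y lam Ssum c0 F) t : Rabs (F t) <= Ssum.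
Proof.
  pose proof (tail_bound (fun n => term x y lam n t) m (F t) Ssum 0) as Ht.
  assert (Hb : forall n, Rabs (term x y lam n t) <= m n).
  { intros. apply term_abs. apply (s_xy _ _ _ _ _ _ _ H). left; apply (s_mpos _ _ _ _ _ _ _ H). }
  specialize (Ht Hb (s_F _ _ _ _ _ _ _ H t) (s_sum _ _ _ _ _ _ _ H)). simpl in Ht.
  pose proof (Hb 0%nat).
  assert (Rabs (F t) <= Rabs (F t - term x y lam 0 t) + Rabs (term x y lam 0 t)).
  { replace (F t) with ((F t - term x y lam 0 t) + term x y lam 0 t) at 1 by ring. apply Rabs_triang. }
  lra.
Qed.

Lemma G_local (F : R -> R) t0 L : derivable_pt_lim F t0 L ->
  forall eps, 0 < eps -> exists d, 0 < d /\ forall s, Rabs s < d ->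
    Rabs (F (t0 + s) - L * sin s - F t0 * cos s) <= eps * Rabs s.
Proof.
  intros HD eps He.
  destruct (HD (eps/3) ltac:(lra)) as [d1 H1].
  assert (P2 : 0 < eps / (3 * (Rabs L + 1))) by (apply Rdiv_lt_0_compat; [lra| pose proof (Rabs_pos L); lra]).
  assert (P3 : 0 < eps / (3 * (Rabs (F t0) + 1))) by (apply Rdiv_lt_0_compat; [lra| pose proof (Rabs_pos (F t0)); lra]).
  destruct (derivable_pt_lim_sin 0 _ P2) as [d2 H2].
  destruct (derivable_pt_lim_cos 0 _ P3) as [d3 H3].
  exists (Rmin d1 (Rmin d2 d3)). split.
  { apply Rmin_glb_lt. apply cond_pos. apply Rmin_glb_lt; apply cond_pos. }
  intros s Hs. pose proof (Rmin_l d1 (Rmin d2 d3)). pose proof (Rmin_r d1 (Rmin d2 d3)).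
  pose proof (Rmin_l d2 d3). pose proof (Rmin_r d2 d3).
  destruct (Req_dec s 0) as [Hs0|Hs0].
  { subst. rewrite Rplus_0_r, sin_0, cos_0, Rabs_R0. replace (F t0 - L * 0 - F t0 * 1) with 0 by ring. rewrite Rabs_R0. lra. }
  specialize (H1 s Hs0 ltac:(lra)). specialize (H2 s Hs0 ltac:(lra)). specialize (H3 s Hs0 ltac:(lra)).
  rewrite Rplus_0_l, sin_0, cos_0, Rminus_0_r in H2. rewrite Rplus_0_l, cos_0, sin_0, Ropp_0, Rminus_0_r in H3.
  assert (E : F (t0 + s) - L * sin s - F t0 * cos s =
     s * (((F (t0 + s) - F t0) / s - L) - L * (sin s / s - 1) - F t0 * ((cos s - 1) / s))).
  { field. auto. }
  rewrite E, Rabs_mult, (Rmult_comm eps). apply Rmult_le_compat_l. apply Rabs_pos.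
  eapply Rle_trans. apply Rabs_triang. eapply Rle_trans. apply Rplus_le_compat_r. apply Rabs_triang.
  rewrite !Rabs_Ropp, !Rabs_mult.
  assert (Rabs L * Rabs (sin s / s - 1) <= eps/3).
  { apply Rle_trans with ((Rabs L + 1) * (eps / (3 * (Rabs L + 1)))).
    apply Rmult_le_compat; try apply Rabs_pos; lra. right; field. pose proof (Rabs_pos L); lra. }
  assert (Rabs (F t0) * Rabs ((cos s - 1) / s) <= eps/3).
  { apply Rle_trans with ((Rabs (F t0) + 1) * (eps / (3 * (Rabs (F t0) + 1)))).
    apply Rmult_le_compat; try apply Rabs_pos; try lra.
    right; field. pose proof (Rabs_pos (F t0)); lra. }
  lra.
Qed.


Lemma cmul (f g : R -> R) : (forall x, continuity_pt f x) -> (forall x, continuity_pt g x) ->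
  forall x, continuity_pt (fun u => f u * g u) x.
Proof. intros Hf Hg x. apply (continuity_pt_mult f g); auto. Qed.
Lemma cadd (f g : R -> R) : (forall x, continuity_pt f x) -> (forall x, continuity_pt g x) ->
  forall x, continuity_pt (fun u => f u + g u) x.
Proof. intros Hf Hg x. apply (continuity_pt_plus f g); auto. Qed.
Lemma csub (f g : R -> R) : (forall x, continuity_pt f x) -> (forall x, continuity_pt g x) ->
  forall x, continuity_pt (fun u => f u - g u) x.
Proof. intros Hf Hg x. apply (continuity_pt_minus f g); auto. Qed.
Lemma ctrig a b mu : forall x, continuity_pt (fun u => a * cos (mu*u) + b * sin (mu*u)) x.
Proof. intros x. apply cont_derive. auto_derive. auto. Qed.
Lemma caff (f : R -> R) a b : (forall x, continuity_pt f x) -> forall x, continuity_pt (fun u => f (a + u*b)) x.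
Proof.
  intros Hf x. apply (continuity_pt_comp (fun u => a + u*b) f). apply cont_derive; auto_derive; auto. auto.
Qed.
Lemma cK : forall x, continuity_pt K x.
Proof. apply K_cont. Qed.

Lemma upper_bound (Gs w0 : R -> R) mm eps d A W :
  (forall x, continuity_pt Gs x) -> (forall x, continuity_pt w0 x) ->
  0 < mm -> 0 < d -> 0 <= eps -> 0 <= A -> 0 <= W ->
  (forall s, Rabs s < d -> Rabs (Gs s) <= eps * Rabs s) -> (forall s, Rabs (Gs s) <= A) ->
  (forall u, Rabs (w0 u) <= mm) ->
  Rabs (RInt (fun u => K u * (Gs (u*mm) * w0 u)) (-W) W) <= 5000 * (eps*mm*mm + A*mm*mm*mm/(d*d)).
Proof.
  intros HG Hw Hmm Hd He HA HW Hloc HglA Hw0.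
  set (c := eps*mm*mm + A*mm*mm*mm/(d*d)).
  assert (Hc : 0 <= c). { unfold c. assert (0 <= A*mm*mm*mm/(d*d)). { apply Rdiv_le_0_compat. repeat apply Rmult_le_pos; lra. nra. } nra. }
  apply Rle_trans with (RInt (fun u => c * (1250 / (1 + u*u))) (-W) W).
  - apply RInt_bound. lra.
    + apply exRg. apply cmul. apply cK. apply cmul; auto. intros; apply (continuity_pt_comp (fun u => u*mm) Gs); auto.
      apply cont_derive; auto_derive; auto.
    + apply exRg. intros x. apply cont_derive. auto_derive. nra.
    + intros u _.
      assert (HGb : Rabs (Gs (u*mm)) <= eps * mm * Rabs u + A * (mm*mm/(d*d)) * (u*u)).
      { assert (Huu : 0 <= u*u) by nra.
        assert (0 <= A * (mm*mm/(d*d)) * (u*u)). { apply Rmult_le_pos; auto. apply Rmult_le_pos; auto. apply Rdiv_le_0_compat; nra. }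
        destruct (Rlt_dec (Rabs (u*mm)) d).
        - pose proof (Hloc _ r). rewrite Rabs_mult, (Rabs_pos_eq mm) in H0 by lra.
          assert (0 <= eps*mm*Rabs u) by (pose proof (Rabs_pos u); repeat apply Rmult_le_pos; lra). nra.
        - assert (d*d <= (u*mm)*(u*mm)).
          { assert (Hq : d*d <= Rabs (u*mm) * Rabs (u*mm)) by (apply Rmult_le_compat; lra).
            rewrite <- Rabs_mult, Rabs_pos_eq in Hq by nra. exact Hq. }
          assert (1 <= mm*mm/(d*d)*(u*u)).
          { apply (Rmult_le_reg_r (d*d)). nra. replace (mm * mm / (d * d) * (u * u) * (d*d)) with ((u*mm)*(u*mm)) by (field; lra). lra. }
          pose proof (HglA (u*mm)). pose proof (Rabs_pos u).
          assert (0 <= eps * mm * Rabs u) by (repeat apply Rmult_le_pos; lra).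
          assert (A <= A * (mm * mm / (d * d)) * (u * u)) by (rewrite Rmult_assoc; nra). lra. }
      pose proof (K_nonneg u). pose proof (K_maj1 u). pose proof (K_maj2 u).
      rewrite !Rabs_mult, (Rabs_pos_eq (K u)) by auto.
      pose proof (Hw0 u). pose proof (Rabs_pos (w0 u)). pose proof (Rabs_pos (Gs (u*mm))).
      apply Rle_trans with (K u * ((eps * mm * Rabs u + A * (mm * mm / (d * d)) * (u * u)) * mm)).
      { apply Rmult_le_compat_l; auto. apply Rmult_le_compat; auto. }
      replace (K u * ((eps * mm * Rabs u + A * (mm * mm / (d * d)) * (u * u)) * mm))
        with (eps*mm*mm * (Rabs u * K u) + A*mm*mm*mm/(d*d) * (u*u*K u)) by (field; lra).
      unfold c. rewrite Rmult_plus_distr_r.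
      assert (0 <= A*mm*mm*mm/(d*d)). { apply Rdiv_le_0_compat. repeat apply Rmult_le_pos; lra. nra. }
      assert (0 <= eps*mm*mm) by (repeat apply Rmult_le_pos; lra).
      apply Rplus_le_compat; apply Rmult_le_compat_l; auto.
  - rewrite RInt_mulc. 2: { apply exRg. intros x. apply cont_derive. auto_derive. nra. }
    pose proof (int_maj W HW). apply Rmult_le_compat_l with (r := c) in H; auto. lra.
Qed.

Lemma sum_special (q b : nat -> R) n A : (forall k, k <> n -> Rabs (q k) <= b k) -> (forall k, 0 <= b k) ->
  A <= q n -> forall N, (n <= N)%nat -> A - sum_f_R0 b N <= sum_f_R0 q N.
Proof.
  intros Hq Hb HA.
  assert (Hgen : forall N, ((N < n)%nat -> - sum_f_R0 b N <= sum_f_R0 q N) /\ ((n <= N)%nat -> A - sum_f_R0 b N <= sum_f_R0 q N)).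
  { induction N.
    - simpl. split.
      + intros. assert (0%nat <> n) by lia. pose proof (Hq 0%nat H0). apply abs_le_elim in H1. lra.
      + intros. assert (n = 0%nat) by lia. subst. pose proof (Hb 0%nat). lra.
    - destruct IHN as [I1 I2]. simpl. split.
      + intros. assert (S N <> n) by lia. pose proof (Hq _ H0). apply abs_le_elim in H1. specialize (I1 ltac:(lia)). lra.
      + intros. destruct (Nat.eq_dec n (S N)).
        * subst. specialize (I1 ltac:(lia)). pose proof (Hb (S N)). lra.
        * specialize (I2 ltac:(lia)). pose proof (Hq (S N) ltac:(lia)). apply abs_le_elim in H0. lra. }
  intros N HN. apply (Hgen N). auto.
Qed.


Lemma psum_cont_gen (tk : nat -> R -> R) N : (forall k x, continuity_pt (tk k) x) ->
  forall x, continuity_pt (fun u => sum_f_R0 (fun k => tk k u) N) x.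
Proof.
  intros Hc. induction N; intros x.
  - simpl. apply Hc.
  - simpl. apply (cadd (fun u => sum_f_R0 (fun k => tk k u) N) (tk (S N))); auto.
Qed.

Lemma RInt_psum (tk : nat -> R -> R) (w : R -> R) a b N :
  (forall k x, continuity_pt (tk k) x) -> (forall x, continuity_pt w x) ->
  RInt (fun u => K u * (sum_f_R0 (fun k => tk k u) N * w u)) a b =
  sum_f_R0 (fun k => RInt (fun u => K u * (tk k u * w u)) a b) N.
Proof.
  intros Hc Hw. induction N.
  - simpl. reflexivity.
  - simpl. rewrite <- IHN.
    rewrite <- RInt_add.
    + apply RInt_extR. intros; ring.
    + apply exRg. apply cmul. apply cK. apply cmul; auto. apply psum_cont_gen; auto.
    + apply exRg. apply cmul. apply cK. apply cmul; auto.
Qed.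

Lemma no_deriv m x y lam Ssum c0 F (H : Setup m x y lam Ssum c0 F) t0 L : ~ derivable_pt_lim F t0 L.
Proof.
  intros HD.
  pose proof (s_mpos _ _ _ _ _ _ _ H) as Hm. pose proof (s_mono _ _ _ _ _ _ _ H) as Hmono.
  pose proof (s_sum _ _ _ _ _ _ _ H) as HS. pose proof (s_xy _ _ _ _ _ _ _ H) as Hxy.
  pose proof (s_c _ _ _ _ _ _ _ H) as Hc. pose proof (s_F _ _ _ _ _ _ _ H) as HF.
  assert (Hm0 : forall n, 0 <= m n) by (intros; left; auto).
  pose proof (series_cont x y lam m Ssum F Hxy Hm0 HS HF) as HFc.
  pose proof (F_bound _ _ _ _ _ _ _ H) as HFb.
  set (A := Ssum + Rabs L + Rabs (F t0)).
  assert (HA : 0 <= A). { pose proof (HFb t0). pose proof (Rabs_pos (F t0)). pose proof (Rabs_pos L). unfold A. lra. }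
  set (eps := / 1280000).
  assert (Heps : 0 < eps) by (unfold eps; lra).
  destruct (G_local F t0 L HD eps Heps) as [d [Hd Hloc]].
  set (kap := Rmin (1/2) (d*d / (1280000*(A+1)))).
  assert (Hkap : 0 < kap). { unfold kap. apply Rmin_glb_lt. lra. apply Rdiv_lt_0_compat; nra. }
  destruct (terms_small m Ssum kap HS Hkap) as [N0 HN0].
  set (n := S N0).
  assert (Hmn : m n < kap). { pose proof (HN0 N0 (le_n _)). rewrite Rabs_pos_eq in H0 by auto. exact H0. }
  set (mm := m n).
  assert (Hmm : 0 < mm) by apply Hm.
  assert (Hmm2 : mm <= 1/2) by (pose proof (Rmin_l (1/2) (d*d / (1280000*(A+1)))); fold kap in H0; unfold mm; lra).
  assert (Hmmd : mm * (1280000*(A+1)) <= d*d).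
  { pose proof (Rmin_r (1/2) (d*d / (1280000*(A+1)))). fold kap in H0.
    assert (mm <= d*d / (1280000*(A+1))) by (unfold mm; lra).
    apply (Rmult_le_compat_r (1280000*(A+1))) in H1; [|lra].
    replace (d * d / (1280000 * (A + 1)) * (1280000 * (A + 1))) with (d*d) in H1 by (field; lra). exact H1. }
  set (W := 320000 * (1 + A/mm)).
  assert (HAmm : 0 <= A/mm) by (apply Rdiv_le_0_compat; lra).
  assert (HW : 320000 <= W) by (unfold W; lra).
  assert (HWmm : W * mm = 320000 * (mm + A)) by (unfold W; field; lra).
  set (T := 1250 / W).
  assert (HT0 : 0 <= T) by (unfold T; apply Rdiv_le_0_compat; lra).
  assert (HTW : T * W = 1250) by (unfold T; field; lra).
  destruct (tail_small m Ssum (mm/(512*W)) HS ltac:(apply Rdiv_lt_0_compat; lra)) as [N1 HN1].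
  set (N := max n N1).
  assert (HnN : (n <= N)%nat) by (unfold N; lia).
  set (tau := Ssum - sum_f_R0 m N).
  assert (Htau : tau < mm/(512*W)) by (apply HN1; unfold N; lia).
  assert (Htau0 : 0 <= tau) by (unfold tau; pose proof (partial_le m Ssum N Hm0 HS); lra).
  set (al := fun k => x k * cos (t0 * lam k) + y k * sin (t0 * lam k)).
  set (be := fun k => y k * cos (t0 * lam k) - x k * sin (t0 * lam k)).
  assert (Hab : forall k, al k * al k + be k * be k = m k * m k).
  { intros k. rewrite <- Hxy. unfold al, be. pose proof (sin2_cos2 (t0 * lam k)). unfold Rsqr in H0.
    replace ((x k * cos (t0 * lam k) + y k * sin (t0 * lam k)) * (x k * cos (t0 * lam k) + y k * sin (t0 * lam k)) +
    (y k * cos (t0 * lam k) - x k * sin (t0 * lam k)) * (y k * cos (t0 * lam k) - x k * sin (t0 * lam k)))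
    with ((x k * x k + y k * y k) * (sin (t0 * lam k) * sin (t0 * lam k) + cos (t0 * lam k) * cos (t0 * lam k))) by ring.
    rewrite H0. ring. }
  assert (Hshift : forall k u, term x y lam k (t0 + u*mm) = al k * cos ((mm * lam k) * u) + be k * sin ((mm * lam k) * u)).
  { intros k u. unfold term, al, be. replace ((t0 + u*mm) * lam k) with (t0 * lam k + (mm * lam k) * u) by ring.
    rewrite cos_plus, sin_plus. ring. }
  set (w0 := fun u => al n * cos ((mm * lam n) * u) + be n * sin ((mm * lam n) * u)).
  set (Gs := fun s => F (t0 + s) - L * sin s - F t0 * cos s).
  assert (HGc : forall z, continuity_pt Gs z).
  { unfold Gs. apply csub. apply csub. intros z. apply (continuity_pt_comp (fun s => t0 + s) F). apply cont_derive; auto_derive; auto. apply HFc.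
    apply cmul. intros; apply cont_const. intros; apply continuity_sin.
    apply cmul. intros; apply cont_const. intros; apply continuity_cos. }
  assert (Hw0c : forall z, continuity_pt w0 z) by (unfold w0; apply ctrig).
  assert (Hw0b : forall u, Rabs (w0 u) <= mm). { intros u. unfold w0. apply lin_trig_bound. apply Hab. lra. }
  assert (HGb : forall s, Rabs (Gs s) <= A).
  { intros s. unfold Gs, A. pose proof (HFb (t0+s)). pose proof (SIN_bound s). pose proof (COS_bound s).
    assert (Rabs (L * sin s) <= Rabs L) by (rewrite Rabs_mult; apply Rle_trans with (Rabs L * 1); [apply Rmult_le_compat_l; [apply Rabs_pos| apply abs_le_intro; lra] | lra]).
    assert (Rabs (F t0 * cos s) <= Rabs (F t0)) by (rewrite Rabs_mult; apply Rle_trans with (Rabs (F t0) * 1); [apply Rmult_le_compat_l; [apply Rabs_pos| apply abs_le_intro; lra] | lra]).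
    apply abs_le_elim in H0, H3, H4. apply abs_le_intro. lra. }
  pose proof (upper_bound Gs w0 mm eps d A W HGc Hw0c Hmm Hd ltac:(lra) HA ltac:(lra) Hloc HGb Hw0b) as UB.
  set (P := fun u => sum_f_R0 (fun k => term x y lam k (t0 + u*mm)) N).
  assert (HtkC : forall k z, continuity_pt (fun u => term x y lam k (t0 + u*mm)) z).
  { intros k. apply (caff (term x y lam k) t0 mm). intros; apply term_cont. }
  assert (HPc : forall z, continuity_pt P z) by (unfold P; apply psum_cont_gen; auto).
  assert (HFPc : forall z, continuity_pt (fun u => F (t0 + u*mm) - P u) z).
  { apply csub; auto. apply caff. exact HFc. }
  rewrite (RInt_extR _ (fun u => 1 * (K u * (P u * w0 u)) + 1 * (K u * ((F (t0 + u*mm) - P u) * w0 u))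
     + (-L) * (K u * ((0 * cos (mm*u) + 1 * sin (mm*u)) * (al n * cos ((mm * lam n) * u) + be n * sin ((mm * lam n) * u))))
     + (- F t0) * (K u * ((1 * cos (mm*u) + 0 * sin (mm*u)) * (al n * cos ((mm * lam n) * u) + be n * sin ((mm * lam n) * u))))
     + 0 * (fun _ => 0) u)) in UB.
  2: { intros u _. unfold Gs, w0. rewrite (Rmult_comm u mm). ring. }
  rewrite (RInt_lin5 (fun u => K u * (P u * w0 u)) (fun u => K u * ((F (t0 + u*mm) - P u) * w0 u))
     (fun u => K u * ((0 * cos (mm*u) + 1 * sin (mm*u)) * (al n * cos ((mm * lam n) * u) + be n * sin ((mm * lam n) * u))))
     (fun u => K u * ((1 * cos (mm*u) + 0 * sin (mm*u)) * (al n * cos ((mm * lam n) * u) + be n * sin ((mm * lam n) * u))))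
     (fun _ => 0)) in UB.
  2: { apply cmul. apply cK. apply cmul; auto. }
  2: { apply cmul. apply cK. apply cmul; auto. }
  2: { apply cmul. apply cK. apply cmul; apply ctrig. }
  2: { apply cmul. apply cK. apply cmul; apply ctrig. }
  2: { intros; apply cont_const. }
  fold (Prod 0 1 mm (al n) (be n) (mm * lam n) W) in UB.
  fold (Prod 1 0 mm (al n) (be n) (mm * lam n) W) in UB.
  set (I1 := RInt (fun u => K u * (P u * w0 u)) (-W) W) in UB.
  set (I2 := RInt (fun u => K u * ((F (t0 + u*mm) - P u) * w0 u)) (-W) W) in UB.
  set (I3 := Prod 0 1 mm (al n) (be n) (mm * lam n) W) in UB.
  set (I4 := Prod 1 0 mm (al n) (be n) (mm * lam n) W) in UB.
  assert (Hmlam : mm * lam n = c0 + INR n) by (unfold mm; apply (mlam _ _ _ _ _ _ _ H)).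
  assert (HINRn : 1 <= INR n) by (unfold n; rewrite S_INR; pose proof (pos_INR N0); lra).
  assert (Habn : al n * al n + be n * be n = mm * mm) by (unfold mm; apply Hab).
  assert (HW1 : 1 <= W) by lra.
  assert (B3 : Rabs I3 <= 1 * mm * T).
  { unfold I3, T. apply Prod_bound; try lra.
    - rewrite Hmlam. rewrite Rabs_left1 by lra. lra.
    - rewrite Hmlam. rewrite Rabs_pos_eq by lra. lra. }
  assert (B4 : Rabs I4 <= 1 * mm * T).
  { unfold I4, T. apply Prod_bound; try lra.
    - rewrite Hmlam. rewrite Rabs_left1 by lra. lra.
    - rewrite Hmlam. rewrite Rabs_pos_eq by lra. lra. }
  assert (B2 : Rabs I2 <= (W - - W) * (tau * mm)).
  { unfold I2. rewrite <- RInt_cst. apply RInt_bound. lra.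
    - apply exRg. apply cmul. apply cK. apply cmul; auto.
    - apply exRg. intros; apply cont_const.
    - intros u _. rewrite !Rabs_mult. pose proof (K_nonneg u). pose proof (K_le1 u).
      rewrite (Rabs_pos_eq (K u)) by auto.
      assert (Rabs (F (t0 + u * mm) - P u) <= tau).
      { unfold P, tau. apply (tail_bound (fun k => term x y lam k (t0 + u*mm)) m); auto.
        intros; apply term_abs; auto. }
      pose proof (Hw0b u). pose proof (Rabs_pos (w0 u)). pose proof (Rabs_pos (F (t0 + u * mm) - P u)).
      apply Rle_trans with (1 * (tau * mm)). 2: lra.
      apply Rmult_le_compat; auto. apply Rmult_le_pos; auto. apply Rmult_le_compat; auto. }
  assert (HI1 : I1 = sum_f_R0 (fun k => Prod (al k) (be k) (mm * lam k) (al n) (be n) (mm * lam n) W) N).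
  { unfold I1, P. rewrite (RInt_psum (fun k u => term x y lam k (t0 + u*mm)) w0); auto.
    apply sum_eq. intros k _. unfold Prod. apply RInt_extR. intros u _. rewrite Hshift. reflexivity. }
  assert (B1 : mm*mm/2 * (Iint 0 W - T) - sum_f_R0 (fun k => m k * (mm * T)) N <= I1).
  { rewrite HI1. apply (sum_special _ _ n); auto.
    - intros k Hk. unfold T. rewrite <- Rmult_assoc. apply Prod_bound.
      + apply Hm0.
      + lra.
      + right; apply Hab.
      + lra.
      + unfold mm. apply (gap _ _ _ _ _ _ _ H). auto.
      + pose proof (lam_pos _ _ _ _ _ _ _ H k). rewrite Hmlam. assert (0 < mm * lam k) by nra.
        rewrite Rabs_pos_eq; lra.
      + lra.
    - intros k. pose proof (Hm k). apply Rmult_le_pos; [lra | apply Rmult_le_pos; lra].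
    - rewrite <- Habn. unfold T. apply Prod_main; auto. rewrite Hmlam. rewrite Rabs_pos_eq; lra. }
  rewrite <- scal_sum in B1.
  pose proof (partial_le m Ssum N Hm0 HS) as HsN.
  pose proof (I0_pos W HW1) as HI0.
  rewrite RInt_cst in UB.
  assert (LB : mm*mm/2*(1/8 - T) - A*mm*T - 2*W*tau*mm <= I1 + I2 - L*I3 - F t0 * I4).
  { assert (E3 : Rabs (L * I3) <= Rabs L * (mm*T)).
    { rewrite Rabs_mult. apply Rmult_le_compat_l. apply Rabs_pos. lra. }
    assert (E4 : Rabs (F t0 * I4) <= Rabs (F t0) * (mm*T)).
    { rewrite Rabs_mult. apply Rmult_le_compat_l. apply Rabs_pos. lra. }
    apply abs_le_elim in E3, E4. apply abs_le_elim in B2.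
    assert (mm*mm/2 * (1/8) <= mm*mm/2 * Iint 0 W) by (apply Rmult_le_compat_l; nra).
    assert (sum_f_R0 m N * (mm * T) <= Ssum * (mm*T)) by (apply Rmult_le_compat_r; nra).
    unfold A. nra. }
  apply abs_le_elim in UB.
  assert (Ea : mm*mm*T <= mm*mm/256).
  { assert (T <= 1/256). { apply (Rmult_le_reg_r W); [lra|]. rewrite HTW. lra. } nra. }
  assert (Eb : A*mm*T <= mm*mm/256).
  { assert (A * T <= mm/256).
    { apply (Rmult_le_reg_r W); [lra|]. replace (A*T*W) with (A*1250) by (rewrite <- HTW; ring).
      replace (mm/256*W) with (W*mm/256) by field. rewrite HWmm. lra. }
    nra. }
  assert (Ec : 2*W*tau*mm <= mm*mm/256).
  { assert (2*W*tau <= mm/256).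
    { assert (W*tau <= W*(mm/(512*W))) by (apply Rmult_le_compat_l; lra).
      replace (W*(mm/(512*W))) with (mm/512) in H0 by (field; lra). lra. }
    nra. }
  assert (Ed : 5000 * (eps*mm*mm) = mm*mm/256) by (unfold eps; field).
  assert (Ee : 5000 * (A*mm*mm*mm/(d*d)) <= mm*mm/256).
  { assert (A*mm*1280000 <= d*d) by nra.
    assert (A*mm/(d*d) <= /1280000).
    { apply (Rmult_le_reg_r (d*d)); [nra|]. replace (A*mm/(d*d)*(d*d)) with (A*mm) by (field; lra). lra. }
    replace (A*mm*mm*mm/(d*d)) with ((A*mm/(d*d))*(mm*mm)) by (field; lra).
    assert (0 <= mm*mm) by nra. nra. }
  assert (0 < mm*mm) by nra.
  assert (HU : I1 + I2 - L*I3 - F t0 * I4 <= 5000 * (eps*mm*mm + A*mm*mm*mm/(d*d))).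
  { destruct UB as [_ UB]. replace (I1 + I2 - L*I3 - F t0 * I4) with (1 * I1 + 1 * I2 + - L * I3 + - F t0 * I4 + 0 * ((W - - W) * 0)) by ring. exact UB. }
  nra.
Qed.


Lemma infinite_sum_ext (u v : nat -> R) l : (forall n, u n = v n) -> infinite_sum u l -> infinite_sum v l.
Proof.
  intros E H eps He. destruct (H eps He) as [N HN]. exists N. intros n Hn.
  rewrite <- (sum_eq u v n); auto.
Qed.

Theorem generic m x y lam Ssum c0 F : Setup m x y lam Ssum c0 F ->
  continuity F /\ forall t, ~ (exists l, derivable_pt_lim F t l).
Proof.
  intros H. split.
  - apply (series_cont x y lam m Ssum F (s_xy _ _ _ _ _ _ _ H)).
    intros; left; apply (s_mpos _ _ _ _ _ _ _ H). apply (s_sum _ _ _ _ _ _ _ H). apply (s_F _ _ _ _ _ _ _ H).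
  - intros t [l Hl]. apply (no_deriv _ _ _ _ _ _ _ H t l Hl).
Qed.


Lemma cmod_sq ar ai j : cmod ar ai j * cmod ar ai j = ar j * ar j + ai j * ai j.
Proof. unfold cmod. rewrite sqrt_sqrt. ring. nra. Qed.

Theorem corollary4p1 (J : nat) (ar ai : nat -> R)
  (Hsum : exists L, sum_gt J (cmod ar ai) L)
  (Hmono : forall j : nat, (J < j)%nat ->
     cmod ar ai j >= cmod ar ai (S j) /\ cmod ar ai (S j) > 0)
  (Hconv : exists phi : R -> R, convex_on_gt J phi /\
     forall j : nat, (J < j)%nat -> phi (INR j) = INR j / cmod ar ai j)
  (Ref Imf : R -> R)
  (HRe : forall t, sum_gt J (re_term ar ai t) (Ref t))
  (HIm : forall t, sum_gt J (im_term ar ai t) (Imf t)) :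
  (* f = Ref + i Imf is continuous, and so are Re f and Im f *)
  continuity Ref /\ continuity Imf /\
  (* f is differentiable nowhere *)
  (forall t, ~ (differentiable_at Ref t /\ differentiable_at Imf t)) /\
  (* Re f and Im f are differentiable nowhere *)
  (forall t, ~ differentiable_at Ref t) /\
  (forall t, ~ differentiable_at Imf t).
Proof.
  destruct Hsum as [Ssum HS].
  set (m := fun n => cmod ar ai (J + 1 + n)).
  set (lam := fun n => freq ar ai (J + 1 + n)).
  assert (Hmpos : forall n, 0 < m n).
  { intros n. unfold m. destruct (Hmono (J + 1 + n)%nat ltac:(lia)). lra. }
  assert (Hmon : forall n, m (S n) <= m n).
  { intros n. unfold m. replace (J + 1 + S n)%nat with (S (J + 1 + n)) by lia.
    destruct (Hmono (J + 1 + n)%nat ltac:(lia)). lra. }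
  assert (Hc : 1 <= INR (J + 1)) by (rewrite plus_INR; simpl; pose proof (pos_INR J); lra).
  assert (Hlam : forall n, lam n = (INR (J+1) + INR n) / m n).
  { intros n. unfold lam, m, freq. rewrite <- plus_INR. reflexivity. }
  assert (SR : Setup m (fun n => ar (J+1+n)%nat) (fun n => - ai (J+1+n)%nat) lam Ssum (INR (J+1)) Ref).
  { constructor; auto.
    - intros n. unfold m. rewrite cmod_sq. ring.
    - intros t. apply (infinite_sum_ext (fun n => re_term ar ai t (J + 1 + n))); [|apply HRe].
      intros n. unfold re_term, term, lam. ring. }
  assert (SI : Setup m (fun n => ai (J+1+n)%nat) (fun n => ar (J+1+n)%nat) lam Ssum (INR (J+1)) Imf).
  { constructor; auto.
    - intros n. unfold m. rewrite cmod_sq. ring.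
    - intros t. apply (infinite_sum_ext (fun n => im_term ar ai t (J + 1 + n))); [|apply HIm].
      intros n. unfold im_term, term, lam. ring. }
  destruct (generic _ _ _ _ _ _ _ SR) as [CR DR].
  destruct (generic _ _ _ _ _ _ _ SI) as [CI DI].
  unfold differentiable_at.
  repeat split; auto.
  intros t [H1 _]. exact (DR t H1).
Qed.
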